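(* Let $m$ be any nonzero complex number. Then for every positive integer $n$, \begin{align*}&\sum_{k=1}^n\frac{(256m-27)k^3-3(128m+9)k^2+2(88m-3)k-24m}{km^k\binom{4k}k} =6-\frac{3(3n+1)(3n+2)}{m^n\binom{4n}n}, \\&\sum_{k=1}^n\frac{(256m-27)k^3-2(64m+27)k^2-(16m+33)k+8m-6}{(4k+1)m^k\binom{4k}k} =6-\frac{3(n+1)(3n+1)(3n+2)}{(4n+1)m^n\binom{4n}n}, \\&\sum_{k=1}^n\frac{(256m-27)k^3-384mk^2+(176m+3)k-24m}{k(3k-1)m^k\binom{4k}k} =3-\frac{3(3n+1)}{m^n\binom{4n}n}, \\&\sum_{k=1}^n\frac{(256m-27)k^3-3(128m-9)k^2+2(88m-3)k-24m}{k(3k-1)(3k-2)m^k\binom{4k}k} =3-\frac{3}{m^n\binom{4n}n}. \end{align*} Consequently, if $|m|>27/256$, then \begin{align*}\sum_{k=1}^\infty\frac{(256m-27)k^3-3(128m+9)k^2+2(88m-3)k-24m}{km^k\binom{4k}k}&=6, \\\sum_{k=1}^\infty\frac{(256m-27)k^3-2(64m+27)k^2-(16m+33)k+8m-6}{(4k+1)m^k\binom{4k}k}&=6, \\\sum_{k=1}^\infty\frac{(256m-27)k^3-384mk^2+(176m+3)k-24m}{k(3k-1)m^k\binom{4k}k}&=3, \\\sum_{k=1}^\infty\frac{(256m-27)k^3-3(128m-9)k^2+2(88m-3)k-24m}{k(3k-1)(3k-2)m^k\binom{4k}k}&=3. \end{align*} *)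

(* Defs.v *)
From Stdlib Require Import Reals.
From Coquelicot Require Import Coquelicot.
Open Scope C_scope.

Definition cn (k : nat) : C := RtoC (INR k).
Definition cbin4 (k : nat) : C := RtoC (Binomial.C (4 * k) k).

Definition t1 (m : C) (k : nat) : C :=
  ((256 * m - 27) * cn k ^ 3 - 3 * (128 * m + 9) * cn k ^ 2
     + 2 * (88 * m - 3) * cn k - 24 * m)
  / (cn k * m ^ k * cbin4 k).

Definition t2 (m : C) (k : nat) : C :=
  ((256 * m - 27) * cn k ^ 3 - 2 * (64 * m + 27) * cn k ^ 2
     - (16 * m + 33) * cn k + 8 * m - 6)
  / ((4 * cn k + 1) * m ^ k * cbin4 k).

Definition t3 (m : C) (k : nat) : C :=
  ((256 * m - 27) * cn k ^ 3 - 384 * m * cn k ^ 2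
     + (176 * m + 3) * cn k - 24 * m)
  / (cn k * (3 * cn k - 1) * m ^ k * cbin4 k).

Definition t4 (m : C) (k : nat) : C :=
  ((256 * m - 27) * cn k ^ 3 - 3 * (128 * m - 9) * cn k ^ 2
     + 2 * (88 * m - 3) * cn k - 24 * m)
  / (cn k * (3 * cn k - 1) * (3 * cn k - 2) * m ^ k * cbin4 k).

(* Main.v *)
Require Import Defs.
From Stdlib Require Import Reals Lra Lia.
From Coquelicot Require Import Coquelicot.
Open Scope C_scope.

Lemma bin_pos n : (0 < Binomial.C (4*n) n)%R.
Proof.
  unfold Binomial.C. apply Rdiv_lt_0_compat. apply INR_fact_lt_0.
  apply Rmult_lt_0_compat; apply INR_fact_lt_0.
Qed.

Lemma bin_ratio n : Binomial.C (4 * S n) (S n) =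
  (Binomial.C (4*n) n * ((4*INR n+1)*(4*INR n+2)*(4*INR n+3)*(4*INR n+4))
   / ((INR n+1)*(3*INR n+1)*(3*INR n+2)*(3*INR n+3)))%R.
Proof.
  unfold Binomial.C.
  replace (4 * S n - S n)%nat with (S (S (S (3*n))))%nat by lia.
  replace (4 * n - n)%nat with (3*n)%nat by lia.
  replace (4 * S n)%nat with (S (S (S (S (4*n)))))%nat by lia.
  rewrite !fact_simpl, !mult_INR, !S_INR, !mult_INR.
  simpl (INR 4). simpl (INR 3).
  pose proof (INR_fact_neq_0 n). pose proof (INR_fact_neq_0 (3*n)).
  pose proof (INR_fact_neq_0 (4*n)). pose proof (pos_INR n).
  field. repeat split; try lra.
Qed.

Lemma cbin4_S n : cbin4 (S n) = cbin4 n * ((4*cn n+1)*(4*cn n+2)*(4*cn n+3)*(4*cn n+4))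
   / ((cn n+1)*(3*cn n+1)*(3*cn n+2)*(3*cn n+3)).
Proof.
  unfold cbin4, cn. rewrite bin_ratio.
  rewrite RtoC_div, !RtoC_mult, !RtoC_plus, !RtoC_mult. reflexivity.
  pose proof (pos_INR n). apply Rgt_not_eq; repeat apply Rmult_lt_0_compat; lra.
Qed.
Open Scope C_scope.

Lemma cn_S n : cn (S n) = cn n + 1.
Proof. unfold cn. rewrite S_INR, RtoC_plus. reflexivity. Qed.

Lemma cbin4_nz n : cbin4 n <> 0.
Proof. unfold cbin4. intro E. apply (f_equal fst) in E. cbn [fst RtoC] in E. pose proof (bin_pos n). lra. Qed.

Lemma cpow_nz (m : C) n : m <> 0 -> m ^ n <> 0.
Proof. intros hm E. apply (f_equal Cmod) in E. rewrite Cmod_pow, Cmod_0 in E.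
  apply Cmod_gt_0 in hm. pose proof (pow_lt _ n hm). lra. Qed.

Ltac cnz := match goal with
 | H : ?e <> 0 |- ?e <> 0 => exact H
 | |- _ => unfold cn; let E := fresh in intro E; apply (f_equal Re) in E; simpl in E;
     match type of E with context [INR ?k] => pose proof (pos_INR k) end; lra end.

Lemma finite (m : C) (hm : m <> 0) n :
     sum_n_m (t1 m) 1 n
       = 6 - 3 * (3 * cn n + 1) * (3 * cn n + 2) / (m ^ n * cbin4 n)
     /\ sum_n_m (t2 m) 1 n
       = 6 - 3 * (cn n + 1) * (3 * cn n + 1) * (3 * cn n + 2)
               / ((4 * cn n + 1) * m ^ n * cbin4 n)
     /\ sum_n_m (t3 m) 1 n = 3 - 3 * (3 * cn n + 1) / (m ^ n * cbin4 n)
     /\ sum_n_m (t4 m) 1 n = 3 - 3 / (m ^ n * cbin4 n).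
Proof.
  induction n as [|n [IH1 [IH2 [IH3 IH4]]]].
  - assert (E : cbin4 0 = 1).
    { unfold cbin4, Binomial.C. simpl. f_equal. field. }
    assert (E2 : cn 0 = 0) by (unfold cn; simpl; reflexivity).
    rewrite !sum_n_m_zero by lia. simpl Cpow. rewrite E, E2.
    repeat split; (match goal with |- ?a = ?b => change (@eq C a b) end); unfold zero; simpl; field; cnz.
  - rewrite !sum_n_Sm by lia. rewrite IH1, IH2, IH3, IH4.
    unfold t1, t2, t3, t4. rewrite cn_S, cbin4_S. simpl Cpow.
    pose proof (cpow_nz m n hm). pose proof (cbin4_nz n).
    repeat split; (match goal with |- ?a = ?b => change (@eq C a b) end); unfold plus; simpl; field; repeat split; first [assumption | cnz].
Qed.
Close Scope C_scope.

Lemma Lrat a b c d : 0 < c -> 0 <= d ->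
  is_lim_seq (fun n => (a*INR n + b)/(c*INR n + d)) (a/c).
Proof.
  intros hc hd.
  apply is_lim_seq_ext_loc with (fun n => (a + b * /INR n)/(c + d * /INR n)).
  { exists 1%nat. intros n hn. apply le_INR in hn. simpl in hn.
    field. split; try lra. intro E. nra. }
  assert (Hi : is_lim_seq (fun n => / INR n) 0).
  { replace (Finite 0) with (Rbar_inv p_infty) by reflexivity.
    apply is_lim_seq_inv. apply is_lim_seq_INR. discriminate. }
  apply is_lim_seq_div'.
  - assert (H : is_lim_seq (fun n => a + b * / INR n) (a + b * 0)).
    { apply is_lim_seq_plus'. apply is_lim_seq_const.
      apply (is_lim_seq_scal_l _ b 0) in Hi. simpl in Hi. exact Hi. }
    rewrite Rmult_0_r, Rplus_0_r in H. exact H.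
  - assert (H : is_lim_seq (fun n => c + d * / INR n) (c + d * 0)).
    { apply is_lim_seq_plus'. apply is_lim_seq_const.
      apply (is_lim_seq_scal_l _ d 0) in Hi. simpl in Hi. exact Hi. }
    rewrite Rmult_0_r, Rplus_0_r in H. exact H.
  - lra.
Qed.

Definition vv (M : R) n := (INR n + 1)^3 / (M ^ n * Binomial.C (4*n) n).

Lemma vv_lim M : 27/256 < M -> is_lim_seq (vv M) 0.
Proof.
  intros hM.
  assert (hM0 : 0 < M) by lra.
  assert (Hpos : forall n, 0 < vv M n).
  { intro n. unfold vv. pose proof (pos_INR n). pose proof (bin_pos n).
    apply Rdiv_lt_0_compat. apply pow_lt; lra. apply Rmult_lt_0_compat; [apply pow_lt|]; lra. }
  assert (Hs : ex_series (fun n => Rabs (vv M n))).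
  { apply ex_series_DAlembert with (27/256/M).
    - apply Rmult_lt_reg_r with M; [lra|]. field_simplify; lra.
    - intro n. specialize (Hpos n). lra.
    - apply is_lim_seq_ext with (fun n =>
        ((1*INR n+2)/(1*INR n+1)) * ((1*INR n+2)/(1*INR n+1)) * ((1*INR n+2)/(1*INR n+1))
        * ((1*INR n+1)/(4*INR n+4)) * ((3*INR n+1)/(4*INR n+1))
        * ((3*INR n+2)/(4*INR n+2)) * ((3*INR n+3)/(4*INR n+3)) * /M).
      + intro n. pose proof (Hpos n). pose proof (Hpos (S n)).
        rewrite Rabs_pos_eq by (apply Rlt_le, Rdiv_lt_0_compat; lra).
        unfold vv. rewrite bin_ratio, S_INR. simpl pow.
        pose proof (pos_INR n). pose proof (bin_pos n).
        assert (0 < M ^ n) by (apply pow_lt; lra).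
        field. repeat split; lra.
      + replace (27/256/M) with (1/1*(1/1)*(1/1)*(1/4)*(3/4)*(3/4)*(3/4)*/M) by (field; lra).
        apply is_lim_seq_mult'; [|apply is_lim_seq_const].
        do 6 (apply is_lim_seq_mult'; [|apply Lrat; lra]).
        apply Lrat; lra. }
  apply ex_series_lim_0 in Hs.
  apply is_lim_seq_ext with (fun n => Rabs (vv M n)); [|exact Hs].
  intro n. apply Rabs_pos_eq. apply Rlt_le, Hpos.
Qed.
Open Scope C_scope.

Lemma series_from (t : nat -> C) (l : C) (R : nat -> C) M :
  (forall n, sum_n_m t 1 n = l - R n) -> is_lim_seq (vv M) 0 ->
  (forall n, (Cmod (R n) <= 27 * vv M n)%R) -> is_series (fun k => t (S k)) l.
Proof.
  intros Hs Hl Hb. unfold is_series. apply filterlim_locally. intro eps.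
  apply (is_lim_seq_scal_l _ 27) in Hl. simpl in Hl. rewrite Rmult_0_r in Hl.
  apply is_lim_seq_spec in Hl. destruct (Hl eps) as [N HN]. exists N. intros n hn.
  apply norm_compat1. unfold sum_n. rewrite sum_n_m_S, Hs.
  apply Rle_lt_trans with (Cmod (R (S n))).
  { right. unfold norm, minus, plus, opp. simpl. assert (E : l - R (S n) + - l = - R (S n)) by ring. rewrite E, Cmod_opp. reflexivity. }
  specialize (HN (S n) ltac:(lia)). specialize (Hb (S n)).
  rewrite Rminus_0_r in HN. apply Rabs_lt_between in HN. lra.
Qed.
Open Scope C_scope.

Lemma bound_gen (m:C) n (r d : R): m<>0 -> (0<=r)%R -> (1<=d)%R -> (r <= 27*(INR n+1)^3)%R ->
  (Cmod (RtoC r / (RtoC d * m^n * cbin4 n)) <= 27 * vv (Cmod m) n)%R.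
Proof.
  intros hm hr hd hb.
  rewrite Cmod_div.
  2:{ pose proof (bin_pos n). pose proof (proj1 (Cmod_gt_0 m) hm).
      assert (0 < Cmod m ^ n)%R by (apply pow_lt; lra).
      intro E. apply (f_equal Cmod) in E. rewrite !Cmod_mult, Cmod_pow, Cmod_0, Cmod_R in E.
      unfold cbin4 in E. rewrite Cmod_R in E. rewrite !Rabs_pos_eq in E by lra.
      assert (0 < d * Cmod m ^ n * Binomial.C (4 * n) n)%R by (apply Rmult_lt_0_compat; [apply Rmult_lt_0_compat|]; lra).
      lra. }
  rewrite !Cmod_mult, Cmod_pow, !Cmod_R. unfold cbin4. rewrite Cmod_R.
  pose proof (bin_pos n). apply Cmod_gt_0 in hm.
  assert (hP : (0 < Cmod m ^ n)%R) by (apply pow_lt; lra).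
  rewrite !Rabs_pos_eq by lra. unfold vv.
  apply Rle_div_l. { apply Rmult_lt_0_compat; [apply Rmult_lt_0_compat|]; lra. }
  replace (27 * ((INR n + 1) ^ 3 / (Cmod m ^ n * Binomial.C (4 * n) n)) *
      (d * Cmod m ^ n * Binomial.C (4 * n) n))%R with (27 * (INR n + 1) ^ 3 * d)%R
    by (field; lra).
  pose proof (pos_INR n).
  assert (0 <= (INR n + 1)^3)%R by (apply pow_le; lra). nra.
Qed.
Open Scope C_scope.

Ltac conv := unfold cn; rewrite ?RtoC_div, ?RtoC_mult, ?RtoC_plus, ?RtoC_mult, ?RtoC_plus;
  [field; repeat split; first [apply cbin4_nz | apply cpow_nz; assumption | cnz] | ..].

Theorem lemma2p1 (m : C) (hm : m <> 0) :
  (forall n : nat, (1 <= n)%nat ->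
     sum_n_m (t1 m) 1 n
       = 6 - 3 * (3 * cn n + 1) * (3 * cn n + 2) / (m ^ n * cbin4 n)
     /\ sum_n_m (t2 m) 1 n
       = 6 - 3 * (cn n + 1) * (3 * cn n + 1) * (3 * cn n + 2)
               / ((4 * cn n + 1) * m ^ n * cbin4 n)
     /\ sum_n_m (t3 m) 1 n = 3 - 3 * (3 * cn n + 1) / (m ^ n * cbin4 n)
     /\ sum_n_m (t4 m) 1 n = 3 - 3 / (m ^ n * cbin4 n))
  /\
  ((Cmod m > 27 / 256)%R ->
     is_series (fun k => t1 m (S k)) (RtoC 6)
     /\ is_series (fun k => t2 m (S k)) (RtoC 6)
     /\ is_series (fun k => t3 m (S k)) (RtoC 3)
     /\ is_series (fun k => t4 m (S k)) (RtoC 3)).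
Proof.
  split. { intros n _. apply (finite m hm n). }
  intros hM. assert (Hv := vv_lim (Cmod m) ltac:(lra)).
  repeat split.
  - apply (series_from _ _ (fun n => 3 * (3 * cn n + 1) * (3 * cn n + 2) / (m ^ n * cbin4 n)) (Cmod m));
      [intro n; exact (proj1 (finite m hm n)) | exact Hv | intro n; cbv beta].
    assert (E : 3 * (3 * cn n + 1) * (3 * cn n + 2) / (m ^ n * cbin4 n)
       = RtoC (3*(3*INR n+1)*(3*INR n+2)) / (RtoC 1 * m^n * cbin4 n)) by conv.
    rewrite E. pose proof (pos_INR n). apply bound_gen; auto; nra.
  - apply (series_from _ _ (fun n => 3 * (cn n + 1) * (3 * cn n + 1) * (3 * cn n + 2)
               / ((4 * cn n + 1) * m ^ n * cbin4 n)) (Cmod m));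
      [intro n; exact (proj1 (proj2 (finite m hm n))) | exact Hv | intro n; cbv beta].
    assert (E : 3 * (cn n + 1) * (3 * cn n + 1) * (3 * cn n + 2)
               / ((4 * cn n + 1) * m ^ n * cbin4 n)
       = RtoC (3*(INR n+1)*(3*INR n+1)*(3*INR n+2)) / (RtoC (4*INR n+1) * m^n * cbin4 n)) by conv.
    rewrite E. pose proof (pos_INR n). apply bound_gen; auto; nra.
  - apply (series_from _ _ (fun n => 3 * (3 * cn n + 1) / (m ^ n * cbin4 n)) (Cmod m));
      [intro n; exact (proj1 (proj2 (proj2 (finite m hm n)))) | exact Hv | intro n; cbv beta].
    assert (E : 3 * (3 * cn n + 1) / (m ^ n * cbin4 n)
       = RtoC (3*(3*INR n+1)) / (RtoC 1 * m^n * cbin4 n)) by conv.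
    rewrite E. pose proof (pos_INR n). apply bound_gen; auto; nra.
  - apply (series_from _ _ (fun n => 3 / (m ^ n * cbin4 n)) (Cmod m));
      [intro n; exact (proj2 (proj2 (proj2 (finite m hm n)))) | exact Hv | intro n; cbv beta].
    assert (E : 3 / (m ^ n * cbin4 n)
       = RtoC 3 / (RtoC 1 * m^n * cbin4 n)) by conv.
    rewrite E. pose proof (pos_INR n). apply bound_gen; auto; nra.
Qed.
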